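(* Let $p\ge 2$ and $q\in\{0,1,\dots,p-2\}$ be integers, let $x$ be a right vertex of $T_H$, let $f$ be any $2p$ distance coloring of $T_H$, and let $v\in\mathcal{F}^{c}_{x,p-q}$ be a corner vertex. Then $$\big|\{u\in\mathcal{F}_{x,p+q+1} : f(u)=f(v)\}\big|\le 2.$$
   Context: $T_H$ is the infinite hexagonal grid with vertex set $\mathbb{Z}^2$: $(i,j)$ is adjacent to $(i,j\pm1)$, and $(i,j)$ is adjacent to $(i+1,j)$ iff $i+j$ is even; no other edges. A vertex $(i,j)$ with $i+j$ even is called a right vertex. $d(u,v)$ is graph distance. A $2p$ distance coloring is a map $f:V(T_H)\to\{1,\dots,n\}$ with $f(u)\ne f(v)$ for all distinct $u,v$ with $d(u,v)\le 2p$. For a vertex $x$ and integer $k\ge0$, $\mathcal{F}_{x,k}=\{u: d(x,u)=k\}$. For a right vertex $x=(i,j)$ and $k\ge2$, the six corner vertices of $\mathcal{F}_{x,k}$ are $(i,j+k)$, $(i+\lceil k/2\rceil, j+\lfloor k/2\rfloor)$, $(i+\lceil k/2\rceil, j-\lfloor k/2\rfloor)$, $(i,j-k)$, $(i-\lfloor k/2\rfloor, j-\lceil k/2\rceil)$, $(i-\lfloor k/2\rfloor, j+\lceil k/2\rceil)$ (all lie in $\mathcal{F}_{x,k}$); their set is denoted $\mathcal{F}^c_{x,k}$, and $\mathcal{F}^{nc}_{x,k}=\mathcal{F}_{x,k}\setminus\mathcal{F}^c_{x,k}$ is the set of non corner vertices. *)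

(* Defs.v *)
From Stdlib Require Import ZArith List Lia.
Import ListNotations.
Open Scope Z_scope.

(* Vertices of the infinite hexagonal grid T_H: Z^2. *)
Definition vtx := (Z * Z)%type.

Definition adj (u v : vtx) : Prop :=
  let (i, j) := u in let (k, l) := v in
  (k = i /\ (l = j + 1 \/ l = j - 1))
  \/ (k = i + 1 /\ l = j /\ Z.even (i + j) = true)
  \/ (k = i - 1 /\ l = j /\ Z.even (k + l) = true).

Definition right_vertex (x : vtx) : Prop := Z.even (fst x + snd x) = true.

Inductive walk : vtx -> vtx -> nat -> Prop :=
| walk_nil : forall u, walk u u 0
| walk_cons : forall u w v n, adj u w -> walk w v n -> walk u v (S n).

Definition dist_eq (u v : vtx) (k : nat) : Prop :=
  walk u v k /\ forall m, (m < k)%nat -> ~ walk u v m.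

Definition dist_le (u v : vtx) (k : nat) : Prop :=
  exists m, (m <= k)%nat /\ walk u v m.

Definition distance_coloring (p n : nat) (f : vtx -> nat) : Prop :=
  (forall u, (1 <= f u <= n)%nat) /\
  (forall u v, u <> v -> dist_le u v (2 * p) -> f u <> f v).

Definition F (x : vtx) (k : nat) (u : vtx) : Prop := dist_eq x u k.

(* corner vertices of F_{x,k} for a right vertex x = (i,j), k >= 2 *)
Definition corners (x : vtx) (k : nat) : list vtx :=
  let i := fst x in let j := snd x in let K := Z.of_nat k in
  let c := (K + 1) / 2 in
  let fl := K / 2 in
  [ (i, j + K); (i + c, j + fl); (i + c, j - fl); (i, j - K);
    (i - fl, j - c); (i - fl, j + c) ].

(* Main.v *)
Require Import Defs.
From Stdlib Require Import ZArith List Lia.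
Open Scope Z_scope.

Definition Dq (r : bool) (e a b : Z) : Z :=
  if r then Z.max (Z.abs a + Z.abs b) (Z.max (2*a-e) (e-2*a))
  else Z.max (Z.abs a + Z.abs b) (Z.max (-2*a-e) (e+2*a)).

Definition D (u w : vtx) : Z :=
  Dq (Z.even (fst u + snd u)) ((fst w - fst u + (snd w - snd u)) mod 2)
     (fst w - fst u) (snd w - snd u).

Lemma par_cases z : exists m, (z = 2*m /\ z mod 2 = 0 /\ Z.even z = true)
  \/ (z = 2*m+1 /\ z mod 2 = 1 /\ Z.even z = false).
Proof.
  exists (z / 2). pose proof (Z.div_mod z 2 ltac:(lia)) as H.
  pose proof (Z.mod_pos_bound z 2 ltac:(lia)) as B.
  assert (z mod 2 = 0 \/ z mod 2 = 1) as [E|E] by lia.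
  - left. split; [lia|split; [exact E|]]. apply Z.even_spec. exists (z/2). lia.
  - right. split; [lia|split; [exact E|]]. destruct (Z.even z) eqn:Ez; [|reflexivity].
    apply Z.even_spec in Ez. destruct Ez as [m' Hm]. lia.
Qed.

Lemma even_true z : Z.even z = true -> exists m, z = 2*m.
Proof. intro H. apply Z.even_spec in H. destruct H as [m Hm]. exists m; lia. Qed.

Ltac split_par :=
  repeat match goal with
  | |- context [Z.even ?z] =>
      let m := fresh "m" in let Hx := fresh "Hx" in
      destruct (par_cases z) as [m [[? [? Hx]]|[? [? Hx]]]]; rewrite Hx; try (exfalso; lia)
  | |- context [?z mod 2] =>
      let m := fresh "m" in let Hx := fresh "Hx" in
      destruct (par_cases z) as [m [[? [Hx ?]]|[? [Hx ?]]]]; rewrite Hx; try (exfalso; lia)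
  end.

Ltac dcrunch := unfold D, Dq; cbn [fst snd]; split_par;
  cbn -[Z.max Z.abs Z.mul Z.sub Z.add Z.opp]; lia.

Lemma D_adj u w v : adj u w -> D u v <= D w v + 1.
Proof.
  destruct u as [i j], w as [k l], v as [s t]. unfold adj.
  intros [[-> [-> | ->]] | [[-> [-> H]] | [-> [-> H]]]];
  try (apply even_true in H; destruct H as [m0 H]); dcrunch.
Qed.

Lemma D_self u : D u u = 0.
Proof. destruct u as [i j]. dcrunch. Qed.

Lemma D_nonneg u v : 0 <= D u v.
Proof. destruct u as [i j], v. dcrunch. Qed.

Lemma D_zero u v : D u v = 0 -> u = v.
Proof. destruct u as [i j], v as [k l]. intro H. assert (i = k /\ j = l) as [-> ->].
  { revert H. dcrunch. } reflexivity. Qed.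

Lemma walk_ge u v m : walk u v m -> D u v <= Z.of_nat m.
Proof.
  induction 1. - rewrite D_self. lia.
  - pose proof (D_adj _ _ v H). lia.
Qed.

Lemma D_step u v : 0 < D u v -> exists w, adj u w /\ D w v = D u v - 1.
Proof.
  destruct u as [i j], v as [k l]. intro Hpos.
  destruct (par_cases (i+j)) as [m0 [[Hm0 [_ He]]|[Hm0 [_ He]]]].
  - assert (D (i, j+1) (k,l) = D (i,j) (k,l) - 1 \/ D (i, j-1) (k,l) = D (i,j) (k,l) - 1
       \/ D (i+1, j) (k,l) = D (i,j) (k,l) - 1) as [H|[H|H]].
    { revert Hpos. dcrunch. }
    + exists (i, j+1). split; [unfold adj; lia | exact H].
    + exists (i, j-1). split; [unfold adj; lia | exact H].
    + exists (i+1, j). split; [unfold adj; right; left; auto | exact H].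
  - assert (D (i, j+1) (k,l) = D (i,j) (k,l) - 1 \/ D (i, j-1) (k,l) = D (i,j) (k,l) - 1
       \/ D (i-1, j) (k,l) = D (i,j) (k,l) - 1) as [H|[H|H]].
    { revert Hpos. dcrunch. }
    + exists (i, j+1). split; [unfold adj; lia | exact H].
    + exists (i, j-1). split; [unfold adj; lia | exact H].
    + exists (i-1, j). split; [|exact H]. unfold adj. right; right. split; [lia|split; [lia|]].
      replace (i - 1 + j) with (2 * (m0)) by lia. apply Z.even_spec. exists m0; lia.
Qed.

Lemma walk_D n : forall u v, D u v = Z.of_nat n -> walk u v n.
Proof.
  induction n as [|n IH]; intros u v H.
  - apply D_zero in H. subst. constructor.
  - destruct (D_step u v) as [w [Hw Hd]]; [lia|].
    econstructor; [exact Hw|]. apply IH. lia.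
Qed.

Lemma walk_D' u v : walk u v (Z.to_nat (D u v)).
Proof. apply walk_D. pose proof (D_nonneg u v). lia. Qed.

Lemma F_D x k u : F x k u -> D x u = Z.of_nat k.
Proof.
  intros [Hw Hmin]. pose proof (walk_ge _ _ _ Hw).
  destruct (Z.eq_dec (D x u) (Z.of_nat k)) as [E|E]; [exact E|].
  exfalso. apply (Hmin (Z.to_nat (D x u))); [pose proof (D_nonneg x u); lia|apply walk_D'].
Qed.

Lemma far p n f u w : distance_coloring p n f -> u <> w -> f u = f w -> D u w > Z.of_nat (2*p).
Proof.
  intros [_ Hc] Hne Hf. destruct (Z_le_gt_dec (D u w) (Z.of_nat (2*p))) as [Hle|Hgt]; [|exact Hgt].
  exfalso. apply (Hc u w Hne); [|exact Hf]. exists (Z.to_nat (D u w)). split; [pose proof (D_nonneg u w); lia|apply walk_D'].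
Qed.

Definition xr (e1 e2 : Z) : Z := if Z.eqb e1 e2 then 0 else 1.
Definition corner (ci : nat) (n f : Z) : Z * Z :=
  match ci with
  | 0%nat => (0, 2*n+f) | 1%nat => (n+f, n) | 2%nat => (n+f, -n)
  | 3%nat => (0, -(2*n+f)) | 4%nat => (-n, -(n+f)) | _ => (-n, n+f) end.
Definition Sph (k a b e : Z) := Z.abs a + Z.abs b <= k /\ 2*a - e <= k /\ e - 2*a <= k.
Definition Reg (ci : nat) (k a b e : Z) : Prop :=
  match ci with
  | 0%nat => b <= -1 /\ Z.abs a + Z.abs b = k
  | 3%nat => b >= 1 /\ Z.abs a + Z.abs b = k
  | 1%nat => e - 2*a = k \/ (a <= 0 /\ b <= 0 /\ -a-b = k)
  | 2%nat => e - 2*a = k \/ (a <= 0 /\ b >= 0 /\ b-a = k)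
  | 4%nat => 2*a - e = k \/ (a >= 0 /\ b >= 0 /\ a+b = k)
  | _ => 2*a - e = k \/ (a >= 0 /\ b <= 0 /\ a-b = k) end.
Definition Lf (ci : nat) (a b : Z) : Z :=
  match ci with
  | 0%nat | 3%nat => a | 1%nat | 4%nat => a - b | _ => a + b end.
Definition Tf (ci : nat) (p : Z) : Z :=
  match ci with 0%nat | 3%nat => p | _ => 2*p end.


Ltac crunch := cbn -[Z.max Z.abs Z.mul Z.sub Z.add Z.opp]; intros; lia.

Lemma one_pt (ci : nat) (p q n f a b e : Z) : (ci < 6)%nat -> 2 <= p -> 0 <= q <= p - 2 ->
  (e = 0 \/ e = 1) -> (f = 0 \/ f = 1) -> p - q = 2*n+f ->
  Dq true e a b = p+q+1 ->
  Dq (e =? 0) (xr e f) (fst (corner ci n f) - a) (snd (corner ci n f) - b) >= 2*p+1 ->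
  Sph (p+q+1) a b e /\ Reg ci (p+q+1) a b e.
Proof.
  intros Hci Hp Hq He Hf HK. unfold Dq, xr, Sph, Reg, corner.
  destruct He as [-> | ->]; destruct Hf as [-> | ->];
  do 6 (destruct ci as [|ci]; [crunch|]); lia.
Qed.

Lemma pair_pt (ci : nat) (p k a1 b1 e1 a2 b2 e2 : Z) : (ci < 6)%nat -> 
  (e1 = 0 \/ e1 = 1) -> (e2 = 0 \/ e2 = 1) ->
  Sph k a1 b1 e1 -> Reg ci k a1 b1 e1 -> Sph k a2 b2 e2 -> Reg ci k a2 b2 e2 ->
  Dq (e1 =? 0) (xr e1 e2) (a2 - a1) (b2 - b1) >= 2*p+1 ->
  Z.abs (Lf ci a2 b2 - Lf ci a1 b1) >= Tf ci p.
Proof.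
  intros Hci He1 He2. unfold Dq, xr, Sph, Reg, Lf, Tf.
  destruct He1 as [-> | ->]; destruct He2 as [-> | ->];
  do 6 (destruct ci as [|ci]; [crunch|]); lia.
Qed.

Lemma three (ci : nat) (p q k a1 b1 e1 a2 b2 e2 a3 b3 e3 : Z) : (ci < 6)%nat ->
  k = p+q+1 -> 2 <= p -> 0 <= q <= p-2 ->
  (e1 = 0 \/ e1 = 1) -> (e2 = 0 \/ e2 = 1) -> (e3 = 0 \/ e3 = 1) ->
  Sph k a1 b1 e1 -> Sph k a2 b2 e2 -> Sph k a3 b3 e3 ->
  Z.abs (Lf ci a2 b2 - Lf ci a1 b1) >= Tf ci p ->
  Z.abs (Lf ci a3 b3 - Lf ci a1 b1) >= Tf ci p ->
  Z.abs (Lf ci a3 b3 - Lf ci a2 b2) >= Tf ci p -> False.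
Proof.
  intros Hci. unfold Sph, Lf, Tf.
  do 6 (destruct ci as [|ci]; [intros; lia|]); lia.
Qed.

Lemma corner_dist (ci : nat) (n f : Z) : (ci < 6)%nat -> (f = 0 \/ f = 1) -> 0 <= n ->
  Dq true f (fst (corner ci n f)) (snd (corner ci n f)) = 2*n+f.
Proof.
  intros Hci Hf Hn. unfold Dq, corner.
  do 6 (destruct ci as [|ci]; [cbn -[Z.max Z.abs Z.mul Z.sub Z.add Z.opp]; lia|]); lia.
Qed.

Lemma corner_par (ci : nat) (n f : Z) : exists t, fst (corner ci n f) + snd (corner ci n f) = 2*t + f.
Proof. unfold corner. destruct ci as [|[|[|[|[|ci]]]]]; cbn [fst snd].
  - exists n; lia. - exists n; lia. - exists 0; lia. - exists (-n-f); lia.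
  - exists (-n-f); lia. - exists 0; lia. Qed.

Lemma corner_in i j (K : nat) v : In v (corners (i, j) K) ->
  exists ci, (ci < 6)%nat /\
  v = (i + fst (corner ci (Z.of_nat K / 2) (Z.of_nat K mod 2)),
       j + snd (corner ci (Z.of_nat K / 2) (Z.of_nat K mod 2))).
Proof.
  unfold corners, corner. cbn [fst snd In].
  destruct (par_cases (Z.of_nat K)) as [m [[H1 [H2 _]]|[H1 [H2 _]]]].
  - assert (A : Z.of_nat K / 2 = m) by (symmetry; apply Z.div_unique_pos with 0; lia).
    assert (B : (Z.of_nat K + 1) / 2 = m) by (symmetry; apply Z.div_unique_pos with 1; lia).
    rewrite A, B, H2.
    intros [H|[H|[H|[H|[H|[H|[]]]]]]]; subst v.
    + exists 0%nat. split; [lia|]. cbn [fst snd]. f_equal; lia.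
    + exists 1%nat. split; [lia|]. cbn [fst snd]. f_equal; lia.
    + exists 2%nat. split; [lia|]. cbn [fst snd]. f_equal; lia.
    + exists 3%nat. split; [lia|]. cbn [fst snd]. f_equal; lia.
    + exists 4%nat. split; [lia|]. cbn [fst snd]. f_equal; lia.
    + exists 5%nat. split; [lia|]. cbn [fst snd]. f_equal; lia.
  - assert (A : Z.of_nat K / 2 = m) by (symmetry; apply Z.div_unique_pos with 1; lia).
    assert (B : (Z.of_nat K + 1) / 2 = m + 1) by (symmetry; apply Z.div_unique_pos with 0; lia).
    rewrite A, B, H2.
    intros [H|[H|[H|[H|[H|[H|[]]]]]]]; subst v.
    + exists 0%nat. split; [lia|]. cbn [fst snd]. f_equal; lia.
    + exists 1%nat. split; [lia|]. cbn [fst snd]. f_equal; lia.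
    + exists 2%nat. split; [lia|]. cbn [fst snd]. f_equal; lia.
    + exists 3%nat. split; [lia|]. cbn [fst snd]. f_equal; lia.
    + exists 4%nat. split; [lia|]. cbn [fst snd]. f_equal; lia.
    + exists 5%nat. split; [lia|]. cbn [fst snd]. f_equal; lia.
Qed.

Lemma D_from_x i j m0 u : i + j = 2*m0 ->
  D (i, j) u = Dq true ((fst u - i + (snd u - j)) mod 2) (fst u - i) (snd u - j).
Proof.
  intro Hx. unfold D. cbn [fst snd].
  replace (Z.even (i+j)) with true; [reflexivity|].
  symmetry. apply Z.even_spec. exists m0. lia.
Qed.

Lemma D_gen i j m0 u w : i + j = 2*m0 ->
  D u w = Dq (((fst u - i) + (snd u - j)) mod 2 =? 0)
             (xr (((fst u - i) + (snd u - j)) mod 2) (((fst w - i) + (snd w - j)) mod 2))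
             ((fst w - i) - (fst u - i)) ((snd w - j) - (snd u - j)).
Proof.
  intro Hx. unfold D.
  assert (E1 : Z.even (fst u + snd u) = (((fst u - i) + (snd u - j)) mod 2 =? 0)).
  { split_par; reflexivity. }
  assert (E2 : (fst w - fst u + (snd w - snd u)) mod 2 =
     xr (((fst u - i) + (snd u - j)) mod 2) (((fst w - i) + (snd w - j)) mod 2)).
  { unfold xr. split_par; reflexivity. }
  rewrite E1, E2. f_equal; lia.
Qed.


Lemma mod2_lin z m r : z = 2*m + r -> 0 <= r < 2 -> z mod 2 = r.
Proof. intros. symmetry. apply Z.mod_unique_pos with m; lia. Qed.

Lemma point (ci : nat) (P Q nn ff i j m0 : Z) (u v : vtx) : (ci < 6)%nat ->
  2 <= P -> 0 <= Q <= P - 2 -> i + j = 2*m0 -> P - Q = 2*nn + ff -> (ff = 0 \/ ff = 1) ->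
  v = (i + fst (corner ci nn ff), j + snd (corner ci nn ff)) ->
  D (i, j) u = P+Q+1 -> (u = v \/ D u v > 2*P) ->
  (((fst u - i + (snd u - j)) mod 2) = 0 \/ ((fst u - i + (snd u - j)) mod 2) = 1) /\
  Sph (P+Q+1) (fst u - i) (snd u - j) ((fst u - i + (snd u - j)) mod 2) /\
  Reg ci (P+Q+1) (fst u - i) (snd u - j) ((fst u - i + (snd u - j)) mod 2).
Proof.
  intros Hci HP HQ Hx HK Hff Ev HD Hfar.
  pose proof (Z.mod_pos_bound (fst u - i + (snd u - j)) 2 ltac:(lia)) as Hb.
  destruct (corner_par ci nn ff) as [t Ht].
  assert (Hv2 : (fst v - i + (snd v - j)) mod 2 = ff).
  { apply mod2_lin with t; [rewrite Ev; cbn [fst snd]; lia | lia]. }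
  rewrite (D_from_x i j m0 u Hx) in HD.
  destruct Hfar as [Eu | Hfar].
  - exfalso. subst u. rewrite Hv2 in HD. rewrite Ev in HD. cbn [fst snd] in HD.
    replace (i + fst (corner ci nn ff) - i) with (fst (corner ci nn ff)) in HD by lia.
    replace (j + snd (corner ci nn ff) - j) with (snd (corner ci nn ff)) in HD by lia.
    rewrite corner_dist in HD; [lia|exact Hci|exact Hff|lia].
  - rewrite (D_gen i j m0 u v Hx) in Hfar. rewrite Hv2 in Hfar.
    rewrite Ev in Hfar. cbn [fst snd] in Hfar.
    replace (i + fst (corner ci nn ff) - i) with (fst (corner ci nn ff)) in Hfar by lia.
    replace (j + snd (corner ci nn ff) - j) with (snd (corner ci nn ff)) in Hfar by lia.
    split; [lia|].
    apply (one_pt ci P Q nn ff); try assumption; try lia.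
Qed.

Theorem mainTheorem6 :
  forall (p q n : nat) (x v : vtx) (f : vtx -> nat),
    (2 <= p)%nat -> (q <= p - 2)%nat ->
    right_vertex x ->
    distance_coloring p n f ->
    In v (corners x (p - q)) ->
    forall us : list vtx,
      NoDup us ->
      (forall u, In u us -> F x (p + q + 1) u /\ f u = f v) ->
      (length us <= 2)%nat.
Proof.
  intros p q n x v f Hp Hq Hx Hcol Hv us Hnd Hus.
  destruct us as [|u1 [|u2 [|u3 us']]]; cbn [length]; try lia.
  exfalso.
  inversion Hnd as [|? ? Hn1 Hnd1]; subst. inversion Hnd1 as [|? ? Hn2 Hnd2]; subst.
  assert (d12 : u1 <> u2) by (intro E; apply Hn1; subst; simpl; auto).
  assert (d13 : u1 <> u3) by (intro E; apply Hn1; subst; simpl; auto).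
  assert (d23 : u2 <> u3) by (intro E; apply Hn2; subst; simpl; auto).
  destruct (Hus u1 ltac:(simpl; auto)) as [F1 C1].
  destruct (Hus u2 ltac:(simpl; auto)) as [F2 C2].
  destruct (Hus u3 ltac:(simpl; auto)) as [F3 C3].
  apply F_D in F1, F2, F3.
  assert (dec : forall a b : vtx, {a = b} + {a <> b}) by (decide equality; apply Z.eq_dec).
  assert (G : forall u, f u = f v -> u = v \/ D u v > 2 * Z.of_nat p).
  { intros u Cu. destruct (dec u v) as [E|E]; [left; exact E|right].
    pose proof (far p n f u v Hcol E Cu). lia. }
  destruct x as [i j]. unfold right_vertex in Hx; cbn [fst snd] in Hx.
  apply even_true in Hx. destruct Hx as [m0 Hx].
  destruct (corner_in i j (p-q) v Hv) as [ci [Hci Ev]].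
  pose proof (Z.div_mod (Z.of_nat (p-q)) 2 ltac:(lia)) as HK.
  pose proof (Z.mod_pos_bound (Z.of_nat (p-q)) 2 ltac:(lia)) as Hfb.
  assert (Hff : Z.of_nat (p-q) mod 2 = 0 \/ Z.of_nat (p-q) mod 2 = 1) by lia.
  assert (HPQ : Z.of_nat p - Z.of_nat q = 2 * (Z.of_nat (p-q) / 2) + Z.of_nat (p-q) mod 2) by lia.
  assert (HP : 2 <= Z.of_nat p) by lia.
  assert (HQ : 0 <= Z.of_nat q <= Z.of_nat p - 2) by lia.
  assert (Hk : Z.of_nat (p+q+1) = Z.of_nat p + Z.of_nat q + 1) by lia.
  rewrite Hk in F1, F2, F3.
  destruct (point ci _ _ _ _ i j m0 u1 v Hci HP HQ Hx HPQ Hff Ev F1 (G u1 C1)) as [He1 [S1 R1]].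
  destruct (point ci _ _ _ _ i j m0 u2 v Hci HP HQ Hx HPQ Hff Ev F2 (G u2 C2)) as [He2 [S2 R2]].
  destruct (point ci _ _ _ _ i j m0 u3 v Hci HP HQ Hx HPQ Hff Ev F3 (G u3 C3)) as [He3 [S3 R3]].
  assert (C12 : f u1 = f u2) by congruence.
  assert (C13 : f u1 = f u3) by congruence.
  assert (C23 : f u2 = f u3) by congruence.
  pose proof (far p n f _ _ Hcol d12 C12) as P12.
  pose proof (far p n f _ _ Hcol d13 C13) as P13.
  pose proof (far p n f _ _ Hcol d23 C23) as P23.
  rewrite (D_gen i j m0 u1 u2 Hx) in P12. rewrite (D_gen i j m0 u1 u3 Hx) in P13. rewrite (D_gen i j m0 u2 u3 Hx) in P23.
  assert (L12 := pair_pt ci (Z.of_nat p) _ _ _ _ _ _ _ Hci He1 He2 S1 R1 S2 R2 ltac:(lia)).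
  assert (L13 := pair_pt ci (Z.of_nat p) _ _ _ _ _ _ _ Hci He1 He3 S1 R1 S3 R3 ltac:(lia)).
  assert (L23 := pair_pt ci (Z.of_nat p) _ _ _ _ _ _ _ Hci He2 He3 S2 R2 S3 R3 ltac:(lia)).
  exact (three ci (Z.of_nat p) (Z.of_nat q) _ _ _ _ _ _ _ _ _ _ Hci eq_refl HP HQ He1 He2 He3 S1 S2 S3 L12 L13 L23).
Qed.
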